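(* Let $q\ge2$, let $0<R<1$ and let $l$ be an integer with $l>\frac{2}{1-R}$. Then there exist a sequence $n_i\to\infty$ and, for each $i$, a deterministic IDF code over $l$ blocks for $\Pi^q_{n_i}$ with $M_i\ge 2^{q^{R l n_i}}$ messages, type-I error probability $0$ and type-II error probability $\lambda_{2,i}$, such that $\lambda_{2,i}\to0$.
   Context: Fix an integer $q\ge 2$, $\mathcal A_q=\{1,\dots,q\}$. For $n\ge1$ and $\sigma\in S_n$, $\sigma\mathbf x=(x_{\sigma^{-1}(1)},\dots,x_{\sigma^{-1}(n)})$ for $\mathbf x\in\mathcal A_q^n$; the $n$-block $q$-ary uniform permutation channel $\Pi^q_n$ has input/output alphabet $\mathcal A_q^n$ and $\Pi^q_n(\mathbf y\mid\mathbf x)=\frac1{n!}\sum_{\sigma\in S_n}\mathbf 1\{\mathbf y=\sigma\mathbf x\}$. An identification-feedback (IDF) code over $l$ blocks with $M$ messages for $\Pi^q_n$ (with block-wise noiseless feedback) is a family $\{(\mathbb Q_{i,1},\dots,\mathbb Q_{i,l},\mathcal D_i)\}_{i=1}^M$ where $\mathbb Q_{i,j}(\mathbf x^{(j)}\mid \mathbf y^{(1)},\dots,\mathbf y^{(j-1)},\mathbf x^{(1)},\dots,\mathbf x^{(j-1)})$ is a conditional probability distribution on $\mathcal A_q^n$ given the previous output blocks (fed back) and previous input blocks, and $\mathcal D_i\subseteq(\mathcal A_q^n)^l$. When message $i$ is sent, the blocks have joint law $\mathbb P^{(i)}(\underline{\mathbf x},\underline{\mathbf y})=\prod_{j=1}^l\mathbb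 Q_{i,j}(\mathbf x^{(j)}\mid\mathbf y^{(1)},\dots,\mathbf y^{(j-1)},\mathbf x^{(1)},\dots,\mathbf x^{(j-1)})\,\Pi^q_n(\mathbf y^{(j)}\mid\mathbf x^{(j)})$. The code is deterministic if each $\mathbb Q_{i,j}$ is a point mass given by a function $\mathbf f_{i,j}$ of the past blocks. Error probabilities: $\lambda_{i\to j}=\mathbb P^{(i)}(\underline{\mathbf y}\in\mathcal D_j)$ for $i\ne j$, $\lambda_{i\not\to i}=\mathbb P^{(i)}(\underline{\mathbf y}\notin\mathcal D_i)$, type-I error $\lambda_1=\max_i\lambda_{i\not\to i}$, type-II error $\lambda_2=\max_{i\neq j}\lambda_{i\to j}$. *)

(* Defs.v *)
From HB Require Import structures.
From mathcomp Require Import all_boot all_order all_algebra all_fingroup.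
From mathcomp Require Import all_classical all_reals all_analysis.
Set Implicit Arguments. Unset Strict Implicit. Unset Printing Implicit Defensive.
Import Order.TTheory GRing.Theory Num.Theory.
Local Open Scope ring_scope.

(* A block: a word of length n over the q-ary alphabet, encoded as 'I_q
   (= {0,...,q-1}, a relabelling of {1,...,q}). *)
Definition word (q n : nat) := {ffun 'I_n -> 'I_q}.

Definition permw (q n : nat) (s : 'S_n) (x : word q n) : word q n :=
  [ffun k => x (s^-1%g k)].

Definition Pichan (R : realType) (q n : nat) (y x : word q n) : R :=
  (#|[set s : 'S_n | y == permw s x]|)%:R / (n`!)%:R.

(* Deterministic IDF code over l blocks with M messages for Pi^q_n, with
   block-wise noiseless feedback.  enc i j ys xs is the input block j (0-based)
   for message i, as a function of the previous output blocks ys and previous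
   input blocks xs (the lists of the first j blocks).  dec i is the decoding
   set D_i of output sequences. *)
Record detIDF (q n l M : nat) := DetIDF {
  enc : 'I_M -> nat -> seq (word q n) -> seq (word q n) -> word q n ;
  dec : 'I_M -> {set {ffun 'I_l -> word q n}}
}.

Definition blocks (q n l : nat) := {ffun 'I_l -> word q n}.

Definition fseq (q n l : nat) (v : blocks q n l) : seq (word q n) :=
  [seq v j | j <- enum 'I_l].

Definition jointP (R : realType) (q n l M : nat) (C : detIDF q n l M)
  (i : 'I_M) (xs ys : blocks q n l) : R :=
  \prod_(j < l)
    ((xs j == enc C i j (take j (fseq ys)) (take j (fseq xs)))%:R
       * Pichan R (ys j) (xs j)).

Definition probD (R : realType) (q n l M : nat) (C : detIDF q n l M)
  (i : 'I_M) (D : {set blocks q n l}) : R :=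
  \sum_(xs : blocks q n l) \sum_(ys in D) jointP R C i xs ys.

Definition lam_to (R : realType) (q n l M : nat) (C : detIDF q n l M)
  (i j : 'I_M) : R := probD R C i (dec C j).

Definition lam_notto (R : realType) (q n l M : nat) (C : detIDF q n l M)
  (i : 'I_M) : R := probD R C i (~: dec C i).

Definition lambda1 (R : realType) (q n l M : nat) (C : detIDF q n l M) : R :=
  \big[Num.max/0]_(i : 'I_M) lam_notto R C i.

Definition lambda2 (R : realType) (q n l M : nat) (C : detIDF q n l M) : R :=
  \big[Num.max/0]_(p : 'I_M * 'I_M | p.1 != p.2) lam_to R C p.1 p.2.

(* Main.v *)
Require Import Defs.
From HB Require Import structures.
From mathcomp Require Import all_boot all_order all_algebra all_fingroup.
From mathcomp Require Import all_classical all_reals all_analysis.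
From mathcomp Require Import zify ring lra.
Import Order.TTheory GRing.Theory Num.Theory.
Module A.
Set Implicit Arguments. Unset Strict Implicit. Unset Printing Implicit Defensive.

Definition agree (X T : finType) (f g : {ffun X -> T}) := [set x | f x == g x].

Lemma ball_fix (X T : finType) (f : {ffun X -> T}) (A : {set X}) :
  #|[set g : {ffun X -> T} | agree f g == A]| <= #|T| ^ (#|X| - #|A|).
Proof.
pose h (g : {ffun X -> T}) := [ffun y : {x : X | x \notin A} => g (val y)].
have := @leq_card_in _ _ h [set g : {ffun X -> T} | agree f g == A].
rewrite card_ffun card_sig.
have -> : #|[pred x | x \notin A]| = #|X| - #|A|.
  by rewrite -(cardsC A) addKn; apply: eq_card => x; rewrite !inE.
apply=> g1 g2; rewrite !inE => /eqP E1 /eqP E2 /ffunP Eh.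
apply/ffunP => x; case: (boolP (x \in A)) => xA.
  have := xA; rewrite -{1}E1 inE => /eqP <-.
  by move: xA; rewrite -E2 inE => /eqP.
by have := Eh (exist _ x xA); rewrite !ffunE.
Qed.

Lemma ball_card (X T : finType) (f : {ffun X -> T}) (a : nat) : 0 < #|T| ->
  #|[set g : {ffun X -> T} | a < #|agree f g|]| <= 2 ^ #|X| * #|T| ^ (#|X| - a.+1).
Proof.
move=> T0.
rewrite -sum1_card (partition_big (agree f) (fun A : {set X} => a < #|A|)); last first.
  by move=> g; rewrite inE.
apply: leq_trans (_ : \sum_(A : {set X}) #|T| ^ (#|X| - a.+1) <= _); last first.
  rewrite sum_nat_const; apply: leq_mul => //.
  rewrite -cardsT -(card_powerset [set: X]).
  by apply/eq_leq/eq_card => A; rewrite powersetE finset.subsetT.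
apply: leq_trans (_ : \sum_(A : {set X} | a < #|A|) #|T| ^ (#|X| - a.+1) <= _); last first.
  by rewrite [X in _ <= X](bigID (fun A : {set X} => a < #|A|)) /= leq_addr.
apply: leq_sum => A aA.
apply: leq_trans (_ : #|[set g : {ffun X -> T} | agree f g == A]| <= _).
  rewrite -sum1_card; apply/eq_leq/eq_bigl => g; rewrite !inE.
  by case: eqP => [->|]; rewrite ?aA ?andbF.
apply: leq_trans (ball_fix f A) _.
by rewrite leq_pexp2l // leq_sub2l.
Qed.

Lemma agreeC (X T : finType) (f g : {ffun X -> T}) : #|agree f g| = #|agree g f|.
Proof. by apply: eq_card => x; rewrite !inE eq_sym. Qed.

Lemma greedy (X T : finType) (a : nat) : a < #|X| -> 0 < #|T| ->
  exists F : {set {ffun X -> T}},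
    (forall f g, f \in F -> g \in F -> f != g -> #|agree f g| <= a) /\
    #|T| ^ #|X| <= #|F| * (2 ^ #|X| * #|T| ^ (#|X| - a.+1)).
Proof.
move=> aX T0.
pose P (F : {set {ffun X -> T}}) :=
  [forall f in F, forall g in F, (f != g) ==> (#|agree f g| <= a)].
have P0 : P finset.set0 by apply/forall_inP => f; rewrite inE.
case: (@arg_maxnP _ finset.set0 P (fun F => #|F|) P0) => F PF Fmax.
have PFP : forall f g, f \in F -> g \in F -> f != g -> #|agree f g| <= a.
  by move=> f g fF gF fg; move/forall_inP: PF => /(_ f fF) /forall_inP /(_ g gF) /implyP; apply.
exists F; split => //.
have cover : forall g, exists2 f, f \in F & a < #|agree f g|.
  move=> g; case: (boolP (g \in F)) => gF.
    exists g => //.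
    by rewrite (_ : agree g g = finset.setT) ?cardsT // ; apply/setP => x; rewrite !inE eqxx.
  case: (boolP [exists f in F, a < #|agree f g|]) => [/exists_inP[f fF H] | /exists_inP H].
    by exists f.
  have Pg : P (g |: F).
    apply/forall_inP => f1; rewrite in_setU1 => /orP[/eqP-> | f1F];
    apply/forall_inP => g1; rewrite in_setU1 => /orP[/eqP-> | g1F]; apply/implyP => ne.
    - by rewrite eqxx in ne.
    - by rewrite agreeC leqNgt; apply/negP => H1; apply: H; exists g1.
    - by rewrite leqNgt; apply/negP => H1; apply: H; exists f1.
    - exact: PFP.
  by have := Fmax _ Pg; rewrite /geq cardsU1 gF /= add1n ltnn.

rewrite -card_ffun (_ : #|{ffun X -> T}| = \sum_(h : {ffun X -> T}) 1); last by rewrite sum1_card.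
apply: leq_trans (_ : \sum_(h : {ffun X -> T}) \sum_(f in F) ((a < #|agree f h|) : nat) <= _).
  apply: leq_sum => h _; have [f fF H] := cover h.
  by rewrite (bigD1 f) //= H.
rewrite exchange_big /= -sum_nat_const; apply: leq_sum => f _.
apply: leq_trans (ball_card f a T0).
rewrite [X in _ <= X](_ : _ = \sum_(h : {ffun X -> T}) (if a < #|agree f h| then 1 else 0)).
  by apply/eq_leq/eq_bigr => h _; case: ifP.
by rewrite -big_mkcond /= sum1dep_card cardsE.
Qed.

Section Perm.
Variables (q n : nat).
Local Notation word := (word q n).

Definition cnt (x y : word) := #|[set s : 'S_n | y == permw s x]|.
Definition orb (x : word) := [set permw s x | s : 'S_n].

Lemma permwM (s t : 'S_n) (x : word) : permw s (permw t x) = permw (t * s)%g x.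
Proof. by apply/ffunP => k; rewrite !ffunE invMg permM. Qed.

Lemma permw1 (x : word) : permw 1%g x = x.
Proof. by apply/ffunP => k; rewrite !ffunE invg1 perm1. Qed.

Lemma sum_cnt (x : word) : (\sum_(y : word) cnt x y = n`!)%N.
Proof.
rewrite -card_Sn -sum1_card (partition_big (fun s => permw s x) xpredT) //.
apply: eq_bigr => y _; rewrite sum1dep_card /cnt cardsE.
by apply: eq_card => s; rewrite /= inE eq_sym.
Qed.

Lemma cnt_orb (x y : word) : y \in orb x -> cnt x y = cnt x x.
Proof.
case/imsetP => t _ ->; rewrite /cnt.
rewrite -[RHS](card_rcoset _ t); apply: eq_card => s.
rewrite mem_rcoset !inE.
rewrite -permwM; apply/eqP/eqP => E.
  by rewrite -E permwM mulgV permw1.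
by rewrite {1}E permwM mulVg permw1.
Qed.

Lemma cnt_out (x y : word) : y \notin orb x -> cnt x y = 0%N.
Proof.
move=> yO; apply/eqP; rewrite cards_eq0; apply/eqP/setP => s; rewrite !inE.
by apply/negP => /eqP E; move: yO; rewrite E; apply/negP/negPn; apply: imset_f.
Qed.

Lemma cnt_xx_gt0 (x : word) : (0 < cnt x x)%N.
Proof. by apply/card_gt0P; exists 1%g; rewrite inE permw1. Qed.

Lemma x_orb (x : word) : x \in orb x.
Proof. by apply/imsetP; exists 1%g => //; rewrite permw1. Qed.

Lemma orb_cnt (x : word) : (#|orb x| * cnt x x = n`!)%N.
Proof.
rewrite -(sum_cnt x) (bigID (fun y => y \in orb x)) /=.
rewrite [X in (_ + X)%N]big1 ?addn0; last by move=> y /cnt_out.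
by rewrite (eq_bigr (fun _ => cnt x x)) ?sum_nat_const // => y /cnt_orb.
Qed.

Lemma orbP (x y : word) : y \in orb x -> orb y = orb x.
Proof.
case/imsetP => t _ ->; apply/setP => z; apply/imsetP/imsetP => [[s _ ->]|[s _ ->]].
  by exists (t * s)%g => //; rewrite permwM.
by exists (t^-1 * s)%g => //; rewrite permwM mulgA mulgV mul1g.
Qed.

Definition ty (x : word) : {ffun 'I_q -> 'I_n.+1} :=
  [ffun c => inord (count_mem c (codom x))].

Lemma ty_orb (x y : word) : ty x = ty y -> y \in orb x.
Proof.
move=> E.
have Ec : forall c, count_mem c (codom x) = count_mem c (codom y).
  move=> c; have := congr1 (fun f : {ffun 'I_q -> 'I_n.+1} => val (f c)) E; rewrite !ffunE.
  have Hs : forall z : word, (count_mem c (codom z) <= n)%N.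
    by move=> z; apply: leq_trans (count_size _ _) _; rewrite size_codom card_ord.
  by rewrite /= !inordK ?ltnS ?Hs.
have : perm_eq (codom y) [tuple x i | i < n].
  have -> : tval [tuple x i | i < n] = codom x by rewrite codomE -val_ord_tuple.
  by apply/allP => c _; rewrite /= -Ec eqxx.
case/tuple_permP => p Hp.
apply/imsetP; exists p^-1%g => //.
apply/ffunP => k; rewrite ffunE invgK.
have H2 : map y (enum 'I_n) = map (fun i => x (p i)) (enum 'I_n).
  rewrite -codomE Hp /= -val_ord_tuple.
  by apply: eq_map => i; rewrite tnth_mktuple.
by have := (eq_in_map _ _ _).2 H2 k; rewrite mem_enum; apply.
Qed.


Lemma big_orb : (0 < q)%N -> exists x0 : word, (q ^ n <= #|orb x0| * (n.+1) ^ q)%N.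
Proof.
move=> q0.
pose cls (t : {ffun 'I_q -> 'I_n.+1}) := #|[set x : word | ty x == t]|.
have [t0 _ tmax] := @arg_maxnP _ (ty [ffun=> Ordinal q0]) xpredT cls isT.
have Hsum : (q ^ n = \sum_(t : {ffun 'I_q -> 'I_n.+1}) cls t)%N.
  rewrite -[in LHS](card_ord q) -[in LHS](card_ord n) -card_ffun -sum1_card.
  rewrite (partition_big ty xpredT) //.
  apply: eq_bigr => t _; rewrite sum1dep_card /cls cardsE.
  by apply: eq_card => x; rewrite /= ?inE.
have Hle : (q ^ n <= (n.+1) ^ q * cls t0)%N.
  rewrite Hsum; apply: leq_trans (_ : \sum_(t : {ffun 'I_q -> 'I_n.+1}) cls t0 <= _)%N.
    by apply: leq_sum => t _; apply: tmax.
  by rewrite sum_nat_const card_ffun !card_ord.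
have : (0 < cls t0)%N.
  rewrite lt0n; apply/negP => /eqP H0; move: Hle; rewrite H0 muln0 leqn0 expn_eq0.
  by case/andP => /eqP q00; rewrite q00 in q0.
rewrite /cls card_gt0 => /set0Pn [x0]; rewrite inE => /eqP Hx0.
exists x0; rewrite mulnC; apply: leq_trans Hle _; rewrite leq_mul2l; apply/orP; right.
apply: subset_leq_card; apply/fintype.subsetP => x; rewrite inE => /eqP Hx.
by apply: ty_orb; rewrite Hx Hx0.
Qed.

Variable R : realType.
Local Open Scope ring_scope.

Lemma PichanE (y x : word) : Pichan R y x = (y \in orb x)%:R / (#|orb x|)%:R.
Proof.
rewrite /Pichan -/(cnt x y) -(orb_cnt x).
case: (boolP (y \in orb x)) => yO.
  have c0 : (cnt x x)%:R != 0 :> R by rewrite pnatr_eq0 -lt0n cnt_xx_gt0.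
  by rewrite cnt_orb // natrM invfM mulrCA mulfV // mulr1 mul1r.
rewrite cnt_out // mul0r.
by rewrite (_ : false%:R = 0 :> R) // mul0r.
Qed.

Lemma sum_Pichan (x : word) : \sum_(y : word) Pichan R y x = 1.
Proof.
rewrite /Pichan -mulr_suml -natr_sum.
rewrite (eq_bigr (fun y => cnt x y)) // sum_cnt mulfV //.
Qed.

End Perm.

End A.
Import A.

Module Cm.
Set Implicit Arguments. Unset Strict Implicit. Unset Printing Implicit Defensive.
Local Open Scope ring_scope.

Lemma probD_det (R : realType) q n l M (C : detIDF q n l M) i D :
  (forall j ys xs, enc C i j ys xs = enc C i j ys [::]) ->
  probD R C i D = \sum_(ys in D) \prod_(j < l) Pichan R (ys j) (enc C i j (take j (fseq ys)) [::]).
Proof.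
move=> Henc; rewrite /probD exchange_big /=; apply: eq_bigr => ys _.
set e := fun j : 'I_l => enc C i j (take j (fseq ys)) [::].
rewrite (eq_bigr (fun xs : blocks q n l => \prod_j ((xs j == e j)%:R * Pichan R (ys j) (xs j)))); last first.
  by move=> xs _; rewrite /jointP; apply: eq_bigr => j _; rewrite Henc.
rewrite -(bigA_distr_bigA (fun j x => (x == e j)%:R * Pichan R (ys j) x)).
apply: eq_bigr => j _.
rewrite (bigD1 (e j)) //= eqxx mul1r big1 ?addr0 // => x /negbTE ->.
by rewrite mul0r.
Qed.

Section Split.
Variables (R : realType) (T : finType) (L : nat).
Definition pref (ys : {ffun 'I_L.+1 -> T}) : {ffun 'I_L -> T} := [ffun k => ys (lift ord_max k)].
Definition join (u : {ffun 'I_L -> T}) (y : T) : {ffun 'I_L.+1 -> T} :=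
  [ffun k => oapp u y (unlift ord_max k)].
Lemma pref_join u y : pref (join u y) = u.
Proof. by apply/ffunP => k; rewrite !ffunE liftK. Qed.
Lemma join_last u y : join u y ord_max = y.
Proof. by rewrite ffunE unlift_none. Qed.
Lemma join_pref ys : join (pref ys) (ys ord_max) = ys.
Proof. by apply/ffunP => k; rewrite !ffunE; case: unliftP => [j ->|->] //=; rewrite ffunE. Qed.

Lemma sum_split (F : {ffun 'I_L.+1 -> T} -> R) :
  \sum_ys F ys = \sum_u \sum_y F (join u y).
Proof.
rewrite pair_bigA /=.
rewrite (reindex (fun p : {ffun 'I_L -> T} * T => join p.1 p.2)) //.
exists (fun ys => (pref ys, ys ord_max)) => [[u y] _ | ys _] /=.
  by rewrite pref_join join_last.
by rewrite join_pref.
Qed.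
End Split.

End Cm.
Import Cm.

Module Dm.
Set Implicit Arguments. Unset Strict Implicit. Unset Printing Implicit Defensive.
Local Open Scope ring_scope.

Section Code.
Variables (q n L : nat) (q1 : (1 < q)%N).
Local Notation word := (word q n).
Definition one : 'I_q := Ordinal q1.
Definition zero : 'I_q := Ordinal (ltnW q1).
Definition wt (t : 'I_n.+1) : word := [ffun k : 'I_n => if (k < t)%N then one else zero].
Definition cnt1 (y : word) := #|[set k | y k == one]|.

Lemma cnt1_wt t : cnt1 (wt t) = t.
Proof.
have tn : (t <= n)%N by rewrite -ltnS ltn_ord.
rewrite /cnt1 (_ : [set k | wt t k == one] = widen_ord tn @: [set: 'I_t]).
  by rewrite card_imset ?cardsT ?card_ord // => a b /(congr1 val) /= /val_inj.
apply/setP => k; rewrite !inE ffunE; apply/idP/imsetP.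
  case: ifP => [kt _ | _]; last by rewrite /one /zero => /eqP /(congr1 val).
  by exists (Ordinal kt); [rewrite finset.in_setT | apply: val_inj].
by case=> k' _ ->; rewrite (ltn_ord k').
Qed.

Lemma cnt1_permw s (y : word) : cnt1 (permw s y) = cnt1 y.
Proof.
rewrite /cnt1 -[RHS](card_preimset _ (@perm_inj _ s^-1%g)); apply: eq_card => k.
by rewrite !inE ffunE.
Qed.

Lemma Pichan_cnt1 (R : realType) (y x : word) : cnt1 y != cnt1 x -> Pichan R y x = 0.
Proof.
move=> H; rewrite /Pichan (_ : [set s : 'S_n | y == permw s x] = finset.set0) ?cards0 ?mul0r //.
apply/setP => s; rewrite !inE; apply/negP => /eqP E.
by move: H; rewrite E cnt1_permw eqxx.
Qed.

Variables (x0 : word) (M : nat).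
Local Notation Xt := {u : {ffun 'I_L -> word} | u \in ffun_on (orb x0)}.
Variable g : 'I_M -> {ffun Xt -> 'I_n.+1}.

Definition fcode (i : 'I_M) (u : {ffun 'I_L -> word}) : 'I_n.+1 := oapp (g i) ord0 (insub u).
Definition encf (i : 'I_M) (j : nat) (ys xs : seq word) : word :=
  if (j < L)%N then x0 else wt (fcode i [ffun k : 'I_L => nth x0 ys k]).
Definition decf (i : 'I_M) : {set blocks q n L.+1} :=
  [set ys : blocks q n L.+1 | cnt1 (ys ord_max) == fcode i (pref ys)].
Definition Code : detIDF q n L.+1 M := DetIDF encf decf.

Variable R : realType.

Definition Pu (u : {ffun 'I_L -> word}) := \prod_(k < L) Pichan R (u k) x0.

Lemma prod_code i (ys : blocks q n L.+1) : \prod_(j < L.+1) Pichan R (ys j) (encf i j (take j (fseq ys)) [::])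
  = Pu (pref ys) * Pichan R (ys ord_max) (wt (fcode i (pref ys))).
Proof.
rewrite big_ord_recr /=; congr (_ * _).
  apply: eq_bigr => k _; rewrite /encf /= ltn_ord ffunE; congr (Pichan _ (ys _) _).
  by apply: val_inj; rewrite /= /bump leqNgt ltn_ord.
rewrite /encf /= ltnn.
suff -> : [ffun k : 'I_L => nth x0 (take L (fseq ys)) k] = pref ys by [].
apply/ffunP => k; rewrite !ffunE nth_take // (nth_map ord0); last by rewrite size_enum_ord; exact: leqW (ltn_ord k).
congr (ys _); apply: val_inj; rewrite /= nth_enum_ord; last exact: leqW (ltn_ord k).
by rewrite /bump leqNgt ltn_ord.
Qed.

Lemma probD_code i (D : {set blocks q n L.+1}) :
  probD R Code i D = \sum_u \sum_y
     (join u y \in D)%:R * (Pu u * Pichan R y (wt (fcode i u))).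
Proof.
rewrite probD_det // big_mkcond /= (sum_split (fun ys => if ys \in D then _ else 0)).
apply: eq_bigr => u _; apply: eq_bigr => y _.
rewrite prod_code pref_join join_last.
by case: (join u y \in D); rewrite ?mul1r ?mul0r.
Qed.

Lemma lambda1_code : lambda1 R Code = 0.
Proof.
rewrite /lambda1; apply: (big_ind (fun x : R => x = 0)) => //.
  by move=> x y -> ->; rewrite maxxx.
move=> i _; rewrite /lam_notto probD_code.
apply: big1 => u _; apply: big1 => y _.
rewrite !inE pref_join join_last.
case: eqP => [_|/eqP H]; first by rewrite mul0r.
by rewrite Pichan_cnt1 ?mulr0 // cnt1_wt.
Qed.

Lemma Pichan_ge0 (y x : word) : 0 <= Pichan R y x.
Proof. by rewrite /Pichan divr_ge0 ?ler0n. Qed.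

Lemma Pu_ge0 u : 0 <= Pu u.
Proof. by apply: prodr_ge0 => k _; apply: Pichan_ge0. Qed.

Lemma card_Xt : #|{: Xt}| = (#|orb x0| ^ L)%N.
Proof.
rewrite card_sig -[in RHS](card_ord L) -card_ffun_on.
by apply: eq_card => u; rewrite inE.
Qed.

Lemma Pu_E u : Pu u = if u \in ffun_on (orb x0) then (#|orb x0|%:R^-1) ^+ L else 0.
Proof.
rewrite /Pu; case: ifP => H.
  rewrite (eq_bigr (fun _ => #|orb x0|%:R^-1)) ?prodr_const ?card_ord // => k _.
  by have /ffun_onP Hk := H; rewrite PichanE Hk mul1r.
case: (pickP (fun k => u k \notin orb x0)) => [k Hk | Hall].
  by rewrite (bigD1 k) //= PichanE (negbTE Hk) mul0r mul0r.
move: H; rewrite (_ : u \in ffun_on (orb x0)) //.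
by apply/ffun_onP => k; have := Hall k; rewrite /= => /negbFE.
Qed.

Lemma card_agree i j :
  #|[set u : {ffun 'I_L -> word} | (u \in ffun_on (orb x0)) && (fcode i u == fcode j u)]|
  = #|agree (g i) (g j)|.
Proof.
rewrite -(card_imset _ val_inj); apply: eq_card => u; rewrite inE.
apply/idP/imsetP => [/andP[H E] | [v]].
  exists (Sub u H); last by [].
  by move: E; rewrite inE /fcode insubT /=.
rewrite inE => E ->; apply/andP; split; first exact: (valP v).
by rewrite /fcode valK.
Qed.

Lemma lam_to_code i j :
  lam_to R Code i j <= #|agree (g i) (g j)|%:R / #|{: Xt}|%:R.
Proof.
rewrite /lam_to probD_code.
apply: le_trans (_ : \sum_u \sum_y (fcode i u == fcode j u)%:R * (Pu u * Pichan R y (wt (fcode i u))) <= _).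
  apply: ler_sum => u _; apply: ler_sum => y _.
  rewrite inE pref_join join_last.
  case: (eqVneq (cnt1 y) (fcode j u)) => Hy /=.
    case: (eqVneq (fcode i u) (fcode j u)) => Hij //=.
    rewrite Pichan_cnt1 ?mulr0 ?mul0r // cnt1_wt Hy.
    by rewrite eq_sym; apply/negP => /eqP /val_inj E; move: Hij; rewrite E eqxx.
  by rewrite mul0r mulr_ge0 ?ler0n // mulr_ge0 ?Pu_ge0 ?Pichan_ge0.
rewrite (_ : \sum_u \sum_y _ = \sum_u (fcode i u == fcode j u)%:R * Pu u); last first.
  apply: eq_bigr => u _.
  by rewrite -mulr_sumr -mulr_sumr sum_Pichan mulr1.
rewrite (eq_bigr (fun u => if (u \in ffun_on (orb x0)) && (fcode i u == fcode j u)
   then (#|orb x0|%:R^-1) ^+ L else 0)); last first.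
  by move=> u _; rewrite Pu_E; case: (u \in _); case: (fcode i u == _); rewrite ?mul1r ?mul0r ?mulr0.
rewrite -big_mkcond /= sumr_const.
by rewrite -card_agree cardsE card_Xt natrX -exprVn mulr_natl.
Qed.

Lemma lambda2_code (a : nat) :
  (forall i j, i != j -> (#|agree (g i) (g j)| <= a)%N) ->
  0 <= lambda2 R Code <= a%:R / #|{: Xt}|%:R.
Proof.
move=> Ha; apply/andP; split.
  rewrite /lambda2; apply: (big_ind (fun x : R => 0 <= x)) => //.
    by move=> x y x0' y0'; rewrite le_max x0'.
  move=> p _; rewrite /lam_to probD_code; apply: sumr_ge0 => u _; apply: sumr_ge0 => y _.
  by rewrite mulr_ge0 ?ler0n // mulr_ge0 ?Pu_ge0 ?Pichan_ge0.
rewrite /lambda2; apply: (big_ind (fun x : R => x <= a%:R / #|{: Xt}|%:R)) => //.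
- by move=> x y Hx Hy; rewrite ge_max Hx Hy.
move=> p Hp; apply: le_trans (lam_to_code _ _) _.
rewrite ler_pM2r ?ler_nat ?Ha // invr_gt0 ltr0n card_Xt expn_gt0 card_gt0.
apply/orP; left; apply/negP => /eqP E.
by have := x_orb x0; rewrite E inE.
Qed.
End Code.

End Dm.
Import Dm.

Module Hm.
Set Implicit Arguments. Unset Strict Implicit. Unset Printing Implicit Defensive.

Lemma sq_le_pow j : (4 <= j)%N -> (j * j <= 2 ^ j)%N.
Proof.
move=> hj; have -> : j = (j - 4) + 4 by lia.
elim: (j - 4) => [|k IH]; first by [].
rewrite (_ : k.+1 + 4 = (k+4).+1)%N ?expnS; [nia | lia].
Qed.

Lemma grow c j : (c + 4 <= j)%N -> ((2 ^ j).+1 ^ c <= 2 ^ (2 ^ j))%N.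
Proof.
move=> hj.
have h1 : ((j.+1) * c <= 2 ^ j)%N.
  have := @sq_le_pow j ltac:(lia); nia.
apply: leq_trans (_ : (2 ^ j.+1) ^ c <= _)%N.
  case: c {hj h1} => [|c]; first by [].
  rewrite leq_exp2r // expnS.
  have : (0 < 2 ^ j)%N by rewrite expn_gt0.
  lia.
by rewrite -expnM leq_exp2l.
Qed.

End Hm.
Import Hm.

Module Em.
Set Implicit Arguments. Unset Strict Implicit. Unset Printing Implicit Defensive.
Local Open Scope ring_scope.

Lemma leq_pow_base m1 m2 e : (m1 <= m2)%N -> (m1 ^ e <= m2 ^ e)%N.
Proof. by move=> h; elim: e => [|e IH] //; rewrite !expnS leq_mul. Qed.

Lemma code_exists (R : realType) (q L j : nat) (q1 : (1 < q)%N) :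
  (q * L + 4 <= j)%N ->
  exists M (C : detIDF q (2 ^ j) L.+1 M),
    (exists K, (q ^ (2^j * L) <= K * q ^ (2^j))%N /\ (2 ^ K <= M)%N) /\
    lambda1 R C = 0 /\ 0 <= lambda2 R C <= 2 / j%:R.
Proof.
move=> hj; set n := (2 ^ j)%N.
have [x0 Hx0] := @big_orb q n (ltnW q1).
pose K := #|{: {u : {ffun 'I_L -> word q n} | u \in ffun_on (orb x0)}}|.
have KE : K = (#|orb x0| ^ L)%N by rewrite /K card_Xt.
have O0 : (0 < #|orb x0|)%N by apply/card_gt0P; exists x0; apply: x_orb.
have K0 : (0 < K)%N by rewrite KE expn_gt0 O0.
pose a := ((2 * K) %/ j)%N.
have haj : (a * j <= 2 * K)%N by apply: leq_trunc_div.
have hja : (2 * K < j * a.+1)%N.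
  have := divn_eq (2 * K) j; have := @ltn_pmod (2 * K) j ltac:(lia). rewrite -/a. nia.
have haK : (a < K)%N by nia.
have T0 : (0 < #|'I_n.+1|)%N by rewrite card_ord.
have [F [HF HFc]] := greedy haK T0.
pose g := fun i : 'I_#|F| => enum_val i.
exists #|F|, (Code q1 g).
split; [exists K; split | split].
- have g1 : (n.+1 ^ (q * L) <= 2 ^ n)%N by apply: grow.
  have g2 : (2 ^ n <= q ^ n)%N by apply: leq_pow_base.
  rewrite expnM; apply: leq_trans (leq_pow_base L Hx0) _.
  rewrite expnMn -expnM -KE leq_mul2l; apply/orP; right.
  exact: leq_trans g1 g2.
- move: HFc; rewrite !card_ord -/K.
  have -> : (n.+1 ^ K = n.+1 ^ a.+1 * n.+1 ^ (K - a.+1))%N by rewrite -expnD subnKC.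
  rewrite mulnA leq_pmul2r ?expn_gt0 // => H1.
  have H2 : (2 ^ K * 2 ^ K <= n.+1 ^ a.+1)%N.
    rewrite -expnD; apply: leq_trans (_ : 2 ^ (j * a.+1) <= _)%N.
      by rewrite leq_exp2l //; lia.
    by rewrite expnM; apply: leq_pow_base; lia.
  have H3 : (0 < 2 ^ K)%N by rewrite expn_gt0.
  by have := leq_trans H2 H1; rewrite leq_pmul2r.
- exact: lambda1_code.
- have Hag : forall i k : 'I_#|F|, i != k -> (#|agree (g i) (g k)| <= a)%N.
    move=> i k ik; apply: HF; rewrite ?enum_valP //.
    by apply: contra ik => /eqP /enum_val_inj ->.
  have /andP[L0 L2] := lambda2_code q1 R Hag.
  apply/andP; split => //; apply: le_trans L2 _.
  rewrite -/K ler_pdivrMr ?ltr0n // mulrAC ler_pdivlMr ?ltr0n; last by lia.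
  by rewrite -!natrM ler_nat mulnC; lia.
Qed.

End Em.
Import Em.

Unset Implicit Arguments. Set Strict Implicit. Set Printing Implicit Defensive.
Local Open Scope classical_set_scope.
Local Open Scope ring_scope.

Theorem theorem3 (R : realType) (q : nat) (r : R) (l : nat) :
  (2 <= q)%N -> 0 < r -> r < 1 -> 2 / (1 - r) < l%:R ->
  exists (n : nat -> nat) (M : nat -> nat)
         (C : forall i : nat, detIDF q (n i) l (M i)),
    (forall B : nat, exists N : nat, forall i : nat, (N <= i)%N -> (B <= n i)%N) /\
    (forall i : nat,
        (2%:R : R) `^ ((q%:R : R) `^ (r * l%:R * (n i)%:R)) <= (M i)%:R) /\
    (forall i : nat, lambda1 R (C i) = 0) /\
    (lambda2 R (C i) @[i --> \oo] --> 0%R).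
Proof.
move=> q1 r0 r1 hl.
have r1' : 0 < 1 - r by rewrite subr_gt0.
have hl' : 2 < l%:R * (1 - r) by rewrite -ltr_pdivrMr.
have hrl : r * l%:R <= l%:R - 2 by lra.
have l2 : (2 < l)%N.
  rewrite -(ltr_nat R); apply: lt_le_trans hl' _.
  by rewrite ler_piMr ?ler0n // lerBlDr lerDl ltW.
case: l hl hl' hrl l2 => [//|L] _ _ hrl l2.
pose J := (q * L + 4)%N.
have H : forall i : nat, exists p : {M : nat & detIDF q (2 ^ (i + J)) L.+1 M},
    ((exists K, (q ^ (2^(i + J) * L) <= K * q ^ (2^(i + J)))%N /\ (2 ^ K <= projT1 p)%N) /\
    lambda1 R (projT2 p) = 0 /\ 0 <= lambda2 R (projT2 p) <= 2 / (i + J)%:R).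
  move=> i; have [M [C HC]] := @code_exists R q L (i + J) q1 (leq_addl _ _).
  by exists (existT _ M C).
pose P i := projT1 (cid (H i)).
exists (fun i => 2 ^ (i + J))%N, (fun i => projT1 (P i)), (fun i => projT2 (P i)).
split; [|split; [|split]].
- move=> B; exists B => i hi; apply: leq_trans hi _.
  by apply: leq_trans (leq_addr J i) (ltnW (ltn_expl _ _)).
- move=> i; have [[K [HK1 HK2]] _] := projT2 (cid (H i)); rewrite -/(P i) in HK2 *.
  set n := (2 ^ (i + J))%N in HK1 HK2 *.
  have hK : (q ^ (n * (L - 1)) <= K)%N.
    have n0 : (0 < q ^ n)%N by rewrite expn_gt0; apply/orP; left; lia.
    rewrite -(leq_pmul2r n0) -expnD; apply: leq_trans HK1.
    by rewrite (_ : n * (L - 1) + n = n * L)%N //; nia.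
  have hrl2 : r * L.+1%:R <= L%:R - 1 by move: hrl; rewrite -natr1; lra.
  have qge1 : 1 <= (q%:R : R) by rewrite ler1n; lia.
  apply: le_trans (_ : (2%:R : R) `^ (K%:R) <= _); last first.
    by rewrite powR_mulrn ?ler0n // -natrX ler_nat.
  apply: ler_powR; first by rewrite ler1n.
  apply: le_trans (_ : (q%:R : R) `^ ((n * (L - 1))%:R) <= _); last first.
    by rewrite powR_mulrn ?ler0n // -natrX ler_nat.
  apply: ler_powR => //.
  rewrite natrM natrB; last by lia.
  have n0 : 0 <= (n%:R : R) by rewrite ler0n.
  nra.
- by move=> i; have [_ [HL1 _]] := projT2 (cid (H i)).
- apply/cvgrPdist_le => e e0.
  have e20 : 0 < e / 2 by rewrite divr_gt0.
  have := @cvg_harmonic R; move/cvgrPdist_le => /(_ (e / 2) e20).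
  apply: filterS => i; rewrite /harmonic /= sub0r normrN => hi.
  have [_ [_ /andP[L0 L1]]] := projT2 (cid (H i)).
  rewrite -/(P i) in L0 L1; rewrite sub0r normrN ger0_norm //.
  apply: le_trans L1 _.
  have : 2 / (i + J)%:R <= 2 * (i.+1%:R)^-1 :> R.
    rewrite ler_pM2l // lef_pV2 ?posrE ?ltr0n ?ler_nat //; lia.
  move: hi; rewrite ger0_norm ?invr_ge0 ?ler0n //.
  move=> h1 h2; apply: le_trans h2 _.
  have := ler_wpM2l (ler0n R 2) h1.
  by rewrite (mulrC e) mulrA divff ?mul1r // pnatr_eq0.
Qed.
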